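(* Let $\mu\ge1$. The language of pairs $(A,B)$ of sequences in $\{0,\dots,\mu\}^\omega$ (read synchronously as words over $\{0,\dots,\mu\}^2$) with $\mathrm{PLA}(A)\ge\mathrm{PLA}(B)$ is $\omega$-context-free, i.e. it is accepted by a B\''uchi pushdown automaton.
   Context: $\mathrm{Sum}(M[0,n-1])=\sum_{j=0}^{n-1}M[j]$. Prefix-average comparison: $\mathrm{PLA}(A)\ge\mathrm{PLA}(B)$ holds iff there are only finitely many indices $i$ with $\mathrm{Sum}(B[0,i-1])\ge\mathrm{Sum}(A[0,i-1])$ and infinitely many indices $i$ with $\mathrm{Sum}(A[0,i-1])>\mathrm{Sum}(B[0,i-1])$. A B\''uchi pushdown automaton is a finite-state automaton with a stack (finite stack alphabet, start symbol, transitions possibly on $\epsilon$ that read the top stack symbol and replace it), accepting an infinite word iff some run visits an accepting state infinitely often. *)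

(* Defs.v *)
From mathcomp Require Import all_boot.
Set Implicit Arguments. Unset Strict Implicit. Unset Printing Implicit Defensive.

Definition Sum (mu : nat) (M : nat -> 'I_mu.+1) (i : nat) : nat :=
  \sum_(j < i) (M j : nat).

Definition PLA_ge (mu : nat) (A B : nat -> 'I_mu.+1) : Prop :=
  (exists N, forall i, N <= i -> ~ (Sum A i <= Sum B i)) /\
  (forall N, exists i, N <= i /\ Sum B i < Sum A i).

(* A transition (p, a, X, p', gamma): in state p, reading a (a letter, or
   epsilon when a = None), with X on top of the stack, go to p' and replace
   X by the word gamma (head of gamma = new top). *)
Record BPDA (Sigma : finType) := {
  pda_state : finType;
  pda_stack : finType;
  pda_init : pda_state;
  pda_bottom : pda_stack;
  pda_trans : seq (pda_state * option Sigma * pda_stack * pda_state * seq pda_stack);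
  pda_final : {set pda_state}
}.

Definition pda_step (Sigma : finType) (P : BPDA Sigma) (w : nat -> Sigma)
  (c : pda_state P * seq (pda_stack P)) (pos : nat)
  (c' : pda_state P * seq (pda_stack P)) (pos' : nat) : Prop :=
  exists p a X p' gamma s,
    (p, a, X, p', gamma) \in pda_trans P /\
    c = (p, X :: s) /\ c' = (p', gamma ++ s) /\
    match a with
    | None => pos' = pos
    | Some b => w pos = b /\ pos' = pos.+1
    end.

Arguments pda_step {Sigma} P w c pos c' pos'.
Definition pda_run (Sigma : finType) (P : BPDA Sigma) (w : nat -> Sigma)
  (c : nat -> pda_state P * seq (pda_stack P)) (pos : nat -> nat) : Prop :=
  c 0 = (pda_init P, [:: pda_bottom P]) /\ pos 0 = 0 /\
  (forall i, pda_step P w (c i) (pos i) (c i.+1) (pos i.+1)) /\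
  (forall n, exists i, n <= pos i).

Arguments pda_run {Sigma} P w c pos.

Definition pda_accepts (Sigma : finType) (P : BPDA Sigma) (w : nat -> Sigma) : Prop :=
  exists c pos, pda_run P w c pos /\
    (forall N, exists i, N <= i /\ (c i).1 \in pda_final P).
Arguments pda_accepts {Sigma} P w.

(* Main.v *)
Require Import Defs.
From mathcomp Require Import all_boot zify.
Set Implicit Arguments. Unset Strict Implicit.

Definition nxt (mu : nat) (s : bool) (r : nat) (X : bool) (a b : nat) : bool * nat * seq bool :=
  let up := if s then b <= a else a <= b in
  let e := (a - b) + (b - a) in
  if up then
    if r + e < mu.+1 then (s, r + e, [:: X]) else (s, r + e - mu.+1, [:: true; X])
  else if e <= r then (s, r - e, [:: X])
  else if X then (s, r + mu.+1 - e, [::])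
  else (~~ s, e - 1 - r, [:: X]).

Definition relv (s : bool) (m SA SB : nat) : Prop :=
  if s then SA = SB + m + 1 else SB = SA + m.

Lemma nxt_ok mu s r h a b SA SB : r < mu.+1 -> a < mu.+1 -> b < mu.+1 ->
  relv s (mu.+1 * h + r) SA SB ->
  let: (s', r', g) := nxt mu s r (0 < h) a b in
  r' < mu.+1 /\ exists h', g ++ behead (nseq h true ++ [:: false]) = nseq h' true ++ [:: false]
    /\ relv s' (mu.+1 * h' + r') (SA + a) (SB + b).
Proof.
move=> Hr Ha Hb E; rewrite /nxt /relv in E *.
case: s E => E; case: h E => [|h] E /=; repeat case: ifP => ? /=;
  (split; first lia);
  first [ exists 0; split; [done | lia]
        | exists 1; split; [done | rewrite ?mulnS ?muln0 in E *; lia]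
        | exists h; split; [done | rewrite ?mulnS ?muln0 in E *; lia]
        | exists h.+1; split; [done | rewrite ?mulnS ?muln0 in E *; lia]
        | exists h.+2; split; [done | rewrite ?mulnS ?muln0 in E *; lia] ].
Qed.


Section A.
Variable mu : nat.
Definition St := (bool * bool * 'I_mu.+1)%type.
Definition Tup := (bool * bool * 'I_mu.+1 * ('I_mu.+1 * 'I_mu.+1) * bool * bool)%type.
Definition mk (t : Tup) : St * option ('I_mu.+1 * 'I_mu.+1) * bool * St * seq bool :=
  let: (md, s, r, l, X, md') := t in
  let: (s', r', g) := nxt mu s r X l.1 l.2 in
  ((md, s, r), Some l, X, (md', s', inord r'), g).
Definition okt (t : Tup) : bool :=
  let: (md, s, r, l, X, md') := t in
  (md ==> md') && (md' ==> (nxt mu s r X l.1 l.2).1.1).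
Definition Ptrans := map mk (filter okt (enum {: Tup})).
Definition P : BPDA ('I_mu.+1 * 'I_mu.+1)%type :=
  {| pda_state := St; pda_stack := bool; pda_init := (false, false, ord0);
     pda_bottom := false; pda_trans := Ptrans;
     pda_final := [set p : St | p.1.1] |}.
End A.

Lemma SumS mu (A : nat -> 'I_mu.+1) i : Sum A i.+1 = Sum A i + A i.
Proof. by rewrite /Sum big_ord_recr. Qed.

Definition Inv mu (A B : nat -> 'I_mu.+1) (cfg : St mu * seq bool) i :=
  exists h, cfg.2 = nseq h true ++ [:: false] /\
    relv cfg.1.1.2 (mu.+1 * h + cfg.1.2) (Sum A i) (Sum B i) /\
    (cfg.1.1.1 ==> cfg.1.1.2).

Lemma step_fwd mu (A B : nat -> 'I_mu.+1) cfg cfg' i pos' :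
  Inv A B cfg i -> pda_step (P mu) (fun i => (A i, B i)) cfg i cfg' pos' ->
  pos' = i.+1 /\ Inv A B cfg' i.+1 /\ (cfg.1.1.1 ==> cfg'.1.1.1).
Proof.
move=> HI [p [a [X [p' [gamma [st [Hmem [Ec [Ec' Hm]]]]]]]]].
move/mapP: Hmem => [t]; rewrite mem_filter => /andP[Hok _].
case: t Hok => [[[[[md s0] r] l] X0] md'] /=.
case Hn: (nxt mu s0 r X0 l.1 l.2) => [[s' r'] g] /= Hok.
case=> Ep Ea EX Ep' Eg; subst p a X p' gamma cfg cfg'.
case: Hm => Hl ->; split => //.
move: HI => [h [/= Hst [Hrel Hmd]]].
have EX0 : X0 = (0 < h) by move: Hst; case: (h) => [|?] [].

have Est : st = behead (nseq h true ++ [:: false]) by rewrite -Hst.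
subst X0.
have := nxt_ok (ltn_ord r) (ltn_ord (A i)) (ltn_ord (B i)) Hrel.
rewrite -Hl /= in Hn; rewrite Hn => -[Hr' [h' [Hg Hrel']]].
move/andP: Hok => [Hmm Hs'].
split => //.
exists h'; split; first by rewrite /= Est.
rewrite /= inordK // !SumS; split => //.
Qed.

Fixpoint run mu (A B : nat -> 'I_mu.+1) N i : St mu * seq bool :=
  match i with
  | 0 => ((false, false, ord0), [:: false])
  | i'.+1 => let: (p, st) := run A B N i' in
     let: (md, s, r) := p in
     let: (s', r', g) := nxt mu s r (head false st) (A i') (B i') in
     ((N <= i'.+1, s', inord r'), g ++ behead st)
  end.

Lemma run_ok mu (A B : nat -> 'I_mu.+1) N :
  0 < N -> (forall i, N <= i -> Sum B i < Sum A i) ->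
  forall i, Inv A B (run A B N i) i /\ (run A B N i).1.1.1 = (N <= i) /\
    pda_step (P mu) (fun i => (A i, B i)) (run A B N i) i (run A B N i.+1) i.+1.
Proof.
move=> N0 HN.
have Hinv : forall i, Inv A B (run A B N i) i /\ (run A B N i).1.1.1 = (N <= i).
  elim=> [|i IHi].
    2: case: IHi => IH Hm.
    split; last by move: N0; case: (N).
    rewrite /Inv /=; exists 0; split => //; split => //; rewrite /Sum !big_ord0 /=; by rewrite muln0.
  rewrite /=; move: IH Hm; case: (run A B N i) => [[[md s] r] st] [h [/= Hst [Hrel _]]] /= Hm.
  have := nxt_ok (ltn_ord r) (ltn_ord (A i)) (ltn_ord (B i)) Hrel.
  have EX : head false st = (0 < h) by rewrite Hst; case: (h).
  have Est : behead st = behead (nseq h true ++ [:: false]) by rewrite Hst.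
  rewrite EX.
  case: (nxt mu s r (0 < h) (A i) (B i)) => [[s' r'] g] [Hr' [h' [Hg Hrel']]].
  split => //.
  exists h'; split; first by rewrite /= Est.
  rewrite /= inordK // !SumS; split => //.
  apply/implyP => Hi; case: s' Hrel' => //=.
  have := HN _ Hi; rewrite !SumS; lia.
move=> i; have [HI Hm] := Hinv i; split => //; split => //.
have [HI' Hm'] := Hinv i.+1.
move: HI' Hm'; rewrite /=.
move: HI Hm; case E: (run A B N i) => [[[md s] r] st] [h [/= Hst [Hrel Hmd]]] /= Hm.
case En: (nxt mu s r (head false st) (A i) (B i)) => [[s' r'] g] /= HI' Hm'.
exists (md, s, r), (Some (A i, B i)), (head false st), (N <= i.+1, s', inord r'), g, (behead st).
split.
  apply/mapP; exists (md, s, r, (A i, B i), head false st, N <= i.+1).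
    rewrite mem_filter mem_enum andbT /= En /=.
    rewrite Hm; apply/andP; split; first by apply/implyP => ?; apply: leqW.
    by move: HI' => [h' [_ [_ +]]]; rewrite /=.
  by rewrite /= En.
split; first by rewrite Hst; case: (h).
by split.
Qed.

Theorem theorem20 (mu : nat) (hmu : 1 <= mu) :
  exists P : BPDA ('I_mu.+1 * 'I_mu.+1)%type,
    forall A B : nat -> 'I_mu.+1,
      pda_accepts P (fun i => (A i, B i)) <-> PLA_ge A B.
Proof.
exists (P mu) => A B; split.
- move=> [c [pos [[Hc0 [Hp0 [Hstep Hall]]] Hfin]]].
  have H : forall i, pos i = i /\ Inv A B (c i) i.
    elim=> [|i [Hpi HI]].
      split => //; rewrite Hc0; exists 0; split => //=.
      by rewrite /Sum !big_ord0 muln0.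
    have := Hstep i; rewrite Hpi => Hs.
    by have [-> [HI' _]] := step_fwd HI Hs.
  have Hmono : forall i k, (c i).1.1.1 -> (c (i + k)).1.1.1.
    move=> i; elim=> [|k IHk]; first by rewrite addn0.
    move=> Hi; have := Hstep (i + k); have [-> HI] := H (i + k) => Hs.
    have [_ [_ Hm]] := step_fwd HI Hs.
    by rewrite addnS; move/implyP: Hm; apply; apply: IHk.
  have [i0 [_ Hi0]] := Hfin 0.
  rewrite inE in Hi0.
  have Hpos : forall j, i0 <= j -> Sum B j < Sum A j.
    move=> j Hj; have := Hmono i0 (j - i0) Hi0; rewrite subnKC //.
    have [_ [h [_ [Hrel Hmd]]]] := H j => Hm.
    move: Hrel; rewrite Hm in Hmd; rewrite (implyP Hmd isT) /relv; lia.
  split.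
    by exists i0 => i Hi; apply/negP; rewrite -ltnNge; apply: Hpos.
  move=> N; exists (maxn N i0); split; first exact: leq_maxl.
  by apply: Hpos; exact: leq_maxr.
- move=> [[N HN] _].
  have HN' : forall i, N.+1 <= i -> Sum B i < Sum A i.
    by move=> i Hi; rewrite ltnNge; apply/negP; apply: HN; apply: ltnW.
  have Hr := run_ok (ltn0Sn N) HN'.
  exists (run A B N.+1), id; split.
    split => //; split => //; split; first by move=> i; have [_ [_ ?]] := Hr i.
    by move=> n; exists n.
  move=> M; exists (maxn M N.+1); split; first exact: leq_maxl.
  have [_ [Hm _]] := Hr (maxn M N.+1).
  by rewrite inE Hm leq_maxr.
Qed.
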